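(* Let $F$ be a Boolean formula over $n$ variables and let $1 \le m \le n$. If $\varphi_{stock}^F(m)$ is true, then $|\mathrm{Sol}(F)| \le m \cdot 2^m$.
   Context: $\mathrm{Sol}(F)\subseteq\{0,1\}^n$ denotes the set of satisfying assignments of $F$. For $n,m,k\ge 1$, $\mathcal{H}(n,m,k)$ denotes a fixed explicit $k$-wise independent family of hash functions $\{0,1\}^n\to\{0,1\}^m$: for $h$ drawn uniformly from $\mathcal{H}(n,m,k)$, all distinct $y_1,\dots,y_k\in\{0,1\}^n$ and all $\alpha_1,\dots,\alpha_k\in\{0,1\}^m$, $\Pr[h(y_1)=\alpha_1\wedge\cdots\wedge h(y_k)=\alpha_k]=2^{-mk}$. The statement $\varphi_{stock}^F(m)$ means: there exist $h_1,\dots,h_m\in\mathcal{H}(n,m,2)$ such that for every $z_1\in\mathrm{Sol}(F)$ there is an index $i\in\{1,\dots,m\}$ such that no $z_2\in\mathrm{Sol}(F)$ with $z_2\neq z_1$ satisfies $h_i(z_2)=h_i(z_1)$ (i.e. every solution is the only solution in its cell under some $h_i$). *)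

(* Defs.v *)
From mathcomp Require Import all_boot.
Set Implicit Arguments. Unset Strict Implicit. Unset Printing Implicit Defensive.

Definition bv (n : nat) := {ffun 'I_n -> bool}.

Inductive formula (n : nat) : Type :=
| FTrue : formula n
| FFalse : formula n
| FVar : 'I_n -> formula n
| FNot : formula n -> formula n
| FAnd : formula n -> formula n -> formula n
| FOr : formula n -> formula n -> formula n.

Fixpoint eval_formula n (F : formula n) (a : bv n) : bool :=
  match F with
  | FTrue => true
  | FFalse => false
  | FVar i => a i
  | FNot G => ~~ eval_formula G a
  | FAnd G H => eval_formula G a && eval_formula H a
  | FOr G H => eval_formula G a || eval_formula H a
  end.

Definition Sol n (F : formula n) : {set bv n} := [set a | eval_formula F a].

(* A hash family {0,1}^n -> {0,1}^m is a nonempty finite list (multiset) of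
   functions, sampled uniformly. It is k-wise independent if for all distinct
   y_1..y_k and all alpha_1..alpha_k, Pr[h(y_j)=alpha_j for all j] = 2^{-mk},
   i.e. #{h in H | ...} * 2^(m*k) = |H|. *)
Definition kwise_independent n m k (H : seq {ffun bv n -> bv m}) : Prop :=
  (0 < size H) /\
  forall (ys : k.-tuple (bv n)) (alphas : k.-tuple (bv m)),
    uniq ys ->
    count (fun h : {ffun bv n -> bv m} =>
             [forall j : 'I_k, h (tnth ys j) == tnth alphas j]) H * 2 ^ (m * k)
    = size H.

Definition phi_stock n m (H : seq {ffun bv n -> bv m}) (F : formula n) : Prop :=
  exists hs : m.-tuple {ffun bv n -> bv m},
    (forall i : 'I_m, tnth hs i \in H) /\
    forall z1, z1 \in Sol F ->
      exists i : 'I_m, forall z2, z2 \in Sol F -> z2 != z1 ->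
        tnth hs i z2 != tnth hs i z1.

(* Main.v *)
Require Import Defs.
From mathcomp Require Import all_boot.

Theorem claim3p1 (n m : nat) (H : seq {ffun bv n -> bv m}) (F : formula n) :
  kwise_independent 2 H -> 1 <= m <= n -> phi_stock H F ->
  #|Sol F| <= m * 2 ^ m.
Proof.
move=> _ _ [hs [_ Hiso]].
pose S (i : 'I_m) : {set bv n} :=
  [set z in Sol F | [forall z2 in Sol F, (z2 != z) ==> (tnth hs i z2 != tnth hs i z)]].
have sub : Sol F \subset \bigcup_(i < m) S i.
  apply/subsetP => z zS; have [i Hi] := Hiso z zS.
  apply/bigcupP; exists i => //; rewrite inE zS /=.
  apply/forall_inP => z2 z2S; apply/implyP => ne; exact: Hi.
have cardS i : #|S i| <= 2 ^ m.
  have inj : {in S i &, injective (tnth hs i)}.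
    move=> x y; rewrite !inE => /andP [xS /forall_inP Hx] /andP [yS _] e.
    apply/eqP; apply/negPn/negP => ne.
    have yS' : y \in Sol F by rewrite inE.
    by have := Hx y yS'; rewrite eq_sym ne e eqxx.
  rewrite -(card_in_imset inj).
  apply: leq_trans (max_card _) _.
  by rewrite card_ffun card_bool card_ord.
apply: leq_trans (subset_leq_card sub) _.
apply: (@leq_trans (\sum_(i < m) #|S i|)).
  apply: (big_ind2 (fun (A : {set bv n}) k => #|A| <= k)) => //.
  - by rewrite cards0.
  - move=> A a B b hA hB; apply: leq_trans (leq_card_setU A B) _.
    exact: leq_add.
rewrite -[m in m * _]card_ord -sum_nat_const.
by apply: leq_sum => i _.
Qed.
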